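(* Let $d\ge 1$ and let $p = x_1^{\alpha_1}\cdots x_d^{\alpha_d} - x_1^{\beta_1}\cdots x_d^{\beta_d}\in \overline{\mathbb{Q}}[x_1,\dots,x_d]$, with $\bm{\alpha}=(\alpha_1,\dots,\alpha_d),\bm{\beta}=(\beta_1,\dots,\beta_d)\in\mathbb{N}^d$, be an irreducible polynomial, and let $I=\langle p\rangle$. Let $L=\mathbb{Z}(\bm{\alpha}-\bm{\beta})\subseteq\mathbb{Z}^d$ and let $A=(a_{ij})\in\mathbb{Z}^{s\times d}$ ($s\ge1$) be an integer matrix with $\{\bm{u}\in\mathbb{Z}^d : A\bm{u}=\bm{0}\} = \operatorname{Sat}(L)$. Let $\pi_1,\dots,\pi_s$ be the first $s$ prime numbers and $\lambda_j=\prod_{i=1}^s \pi_i^{a_{ij}}$ for $j=1,\dots,d$. Then the invariant ideal of the linear loop with initial vector $(1,\dots,1)$ and update matrix $\operatorname{diag}(\lambda_1,\dots,\lambda_d)$ is exactly $I$.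
   Context: Throughout, $\mathbb{K}=\overline{\mathbb{Q}}$. A linear loop with initial vector $\bm{s}$ and update matrix $M$ (a $d\times d$ matrix) produces the orbit $\bm{x}(n)=M^n\bm{s}$, $n\ge 0$. A polynomial $P\in\mathbb{K}[x_1,\dots,x_d]$ is an invariant of the loop if $P(\bm{x}(n))=0$ for all $n\ge0$; the invariant ideal of the loop is the ideal of all its invariants. For a sublattice $L\subseteq\mathbb{Z}^d$, $\operatorname{Sat}(L)=\{\bm{u}\in\mathbb{Z}^d : c\bm{u}\in L \text{ for some } c\in\mathbb{Z}\setminus\{0\}\}$. (Such a matrix $A$ always exists; this loop is the output of the paper's synthesis procedure on input $I$.) *)

(* Defs.v *)
From HB Require Import structures.
From mathcomp Require Import all_boot all_order all_algebra all_field.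
From mathcomp Require Import mpoly.
Set Implicit Arguments. Unset Strict Implicit. Unset Printing Implicit Defensive.
Import Order.TTheory GRing.Theory Num.Theory.
Local Open Scope ring_scope.

(* K = \bar{Q} is modelled by algC (MathComp's algebraic closure of Q). *)

Definition next_prime (m : nat) : nat :=
  ex_minn (let: exist2 p Hp1 Hp2 := prime_above m in
           ex_intro (fun q => (m < q)%N && prime q) p (introT andP (conj Hp1 Hp2))).

(* nth_prime i = the (i+1)-th prime: nth_prime 0 = 2, nth_prime 1 = 3, ... *)
Fixpoint nth_prime (i : nat) : nat :=
  match i with
  | 0 => 2
  | i'.+1 => next_prime (nth_prime i')
  end.

Definition irreducible_elt (R : idomainType) (p : R) : Prop :=
  p != 0 /\ p \isn't a GRing.unit /\
  forall q r : R, p = q * r -> q \is a GRing.unit \/ r \is a GRing.unit.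

Definition loop_orbit (R : pzRingType) (d : nat) (M : 'M[R]_d) (s : 'cV[R]_d) (n : nat)
  : 'cV[R]_d := (M ^+ n) *m s.

Definition invariant_ideal (R : comNzRingType) (d : nat) (M : 'M[R]_d) (s : 'cV[R]_d)
  (P : {mpoly R[d]}) : Prop :=
  forall n : nat, P.@[fun i => loop_orbit M s n i ord0] = 0.

Definition principal_ideal (R : comNzRingType) (d : nat) (p P : {mpoly R[d]}) : Prop :=
  exists r : {mpoly R[d]}, P = r * p.

(* Sat(L) for the lattice L = Z v, vectors in Z^d as int column vectors *)
Definition in_lattice_span (d : nat) (v u : 'cV[int]_d) : Prop :=
  exists k : int, u = k *: v.

Definition in_Sat_span (d : nat) (v u : 'cV[int]_d) : Prop :=
  exists c : int, c != 0 /\ in_lattice_span v (c *: u).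

Definition exp_diff (d : nat) (alpha beta : 'X_{1..d}) : 'cV[int]_d :=
  \col_j ((alpha j)%:Z - (beta j)%:Z).

Definition lambda_of (s d : nat) (A : 'M[int]_(s, d)) (j : 'I_d) : algC :=
  \prod_(i < s) ((nth_prime i)%:R ^ (A i j)).

(* Main.v *)
Require Import Defs.
From HB Require Import structures.
From mathcomp Require Import all_boot all_order all_algebra all_field.
From mathcomp Require Import mpoly.
Import Order.TTheory GRing.Theory Num.Theory.
Local Open Scope ring_scope.

From mathcomp Require Import zify ring.
Set Implicit Arguments. Unset Strict Implicit. Unset Printing Implicit Defensive.

Lemma next_primeP m : ((m < next_prime m) && prime (next_prime m))%N.
Proof. by rewrite /next_prime; case: ex_minnP. Qed.

Lemma nth_prime_prime i : prime (nth_prime i).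
Proof. by case: i => [|i] //=; case/andP: (next_primeP (nth_prime i)). Qed.

Lemma nth_prime_lt i j : (i < j)%N -> (nth_prime i < nth_prime j)%N.
Proof.
apply: (homo_ltn (r := fun a b => (a < b)%N)); first exact: ltn_trans.
by move=> k /=; case/andP: (next_primeP (nth_prime k)).
Qed.

Lemma nth_prime_inj : injective nth_prime.
Proof.
move=> i j e; case: (ltngtP i j) => // h; have := nth_prime_lt h; by rewrite e ltnn.
Qed.

Lemma logn_prod_seq (I : Type) p (r : seq I) (F : I -> nat) :
  (forall i, 0 < F i)%N ->
  logn p (\prod_(i <- r) F i) = (\sum_(i <- r) logn p (F i))%N.
Proof.
move=> hF; elim: r => [|x r IH]; first by rewrite !big_nil logn1.
rewrite !big_cons lognM ?IH //; apply: prodn_gt0 => i; exact: hF.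
Qed.

Lemma prime_indep s (e e' : 'I_s -> nat) :
  (\prod_(i < s) nth_prime i ^ e i = \prod_(i < s) nth_prime i ^ e' i)%N ->
  e =1 e'.
Proof.
have key : forall (f : 'I_s -> nat) (k : 'I_s),
    logn (nth_prime k) (\prod_(i < s) nth_prime i ^ f i) = f k.
  move=> f k; rewrite logn_prod_seq; last first.
    by move=> i; rewrite expn_gt0 prime_gt0 // nth_prime_prime.
  rewrite (bigD1 k) //= big1 ?addn0.
    by rewrite lognX logn_prime ?nth_prime_prime // eqxx muln1.
  move=> i ik; rewrite lognX logn_prime ?nth_prime_prime //.
  case: eqP => [/nth_prime_inj/val_inj h|]; last by rewrite muln0.
  by rewrite h eqxx in ik.
by move=> E k; rewrite -(key e k) -(key e' k) E.
Qed.

Lemma expsum0 (s : seq algC) (F : algC -> algC) :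
  uniq s -> (forall n, \sum_(mu <- s) F mu * mu ^+ n = 0) ->
  forall mu, mu \in s -> F mu = 0.
Proof.
elim: s F => [|a s IH] F //= /andP[an us] H.
have Hs : forall mu, mu \in s -> F mu = 0.
  have H2 : forall n, \sum_(mu <- s) (F mu * (mu - a)) * mu ^+ n = 0.
    move=> n; have := H n.+1; have := H n; rewrite !big_cons => h0 h1.
    have -> : \sum_(mu <- s) F mu * (mu - a) * mu ^+ n =
      (F a * a ^+ n.+1 + \sum_(mu <- s) F mu * mu ^+ n.+1) -
      a * (F a * a ^+ n + \sum_(mu <- s) F mu * mu ^+ n).
      rewrite mulrDr big_distrr /= exprS.
      have -> : \sum_(mu <- s) F mu * (mu - a) * mu ^+ n =
        \sum_(mu <- s) F mu * mu ^+ n.+1 - \sum_(i <- s) a * (F i * i ^+ n).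
        rewrite -sumrB; apply: eq_bigr => i _; rewrite exprS; ring.
      ring.
    by rewrite h0 h1 mulr0 subr0.
  move=> mu ms; have := IH _ us H2 mu ms => /eqP; rewrite mulf_eq0 subr_eq0.
  case/orP => [/eqP //|/eqP e]; by rewrite -e ms in an.
move=> mu; rewrite inE => /orP[/eqP ->|]; last exact: Hs.
have := H 0%N; rewrite big_cons expr0 mulr1 big_seq big1 ?addr0 //.
by move=> i /Hs ->; rewrite mul0r.
Qed.

Lemma group_sum (T U : eqType) (V : nmodType) (S : seq T) (f : T -> U) (G : T -> V) :
  \sum_(m <- S) G m = \sum_(mu <- undup (map f S)) \sum_(m <- S | f m == mu) G m.
Proof.
rewrite (exchange_big_dep predT) //=.
apply: eq_big_seq => m mS.
have Hin : f m \in undup (map f S) by rewrite mem_undup map_f.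
have hu := undup_uniq (map f S).
rewrite (perm_uniq (perm_to_rem Hin)) /= in hu; case/andP: hu => nr _.
rewrite (big_rem (f m)) //= eqxx big1_seq ?addr0 //= => mu /andP[/eqP e].
by rewrite -e (negbTE nr).
Qed.


Definition colm d (m : 'X_{1..d}) : 'cV[int]_d := \col_j (m j)%:Z.
Definition fval s d (A : 'M[int]_(s,d)) (m : 'X_{1..d}) : algC :=
  \prod_(j < d) lambda_of A j ^+ m j.

Lemma pr_neq0 i : (nth_prime i)%:R != 0 :> algC.
Proof. by rewrite pnatr_eq0 -lt0n prime_gt0 // nth_prime_prime. Qed.

Lemma fvalE s d (A : 'M[int]_(s,d)) m :
  fval A m = \prod_(i < s) ((nth_prime i)%:R : algC) ^ ((A *m colm m) i 0).
Proof.
rewrite /fval /lambda_of.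
under eq_bigr => j _ do rewrite -prodrXl.
rewrite exchange_big /=; apply: eq_bigr => i _.
transitivity (\prod_(j < d) ((nth_prime i)%:R : algC) ^ (A i j * (m j)%:Z)).
  by apply: eq_bigr => j _; rewrite exprnP exprz_exp.
rewrite !mxE (big_morph _ (fun x y => expfzDr x y (pr_neq0 i)) (expr0z _)).
by apply: eq_bigr => j _; rewrite mxE.
Qed.

Lemma f_inj s d (A : 'M[int]_(s,d)) m m' :
  fval A m = fval A m' -> A *m colm m = A *m colm m'.
Proof.
rewrite !fvalE.
set z := A *m colm m; set z' := A *m colm m'.
pose K (i : 'I_s) := (absz (z i 0%R) + absz (z' i 0%R))%N.
pose a (i : 'I_s) := absz (z i 0 + (K i)%:Z).
pose a' (i : 'I_s) := absz (z' i 0 + (K i)%:Z).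
have ha : forall i, z i 0 + (K i)%:Z = (a i)%:Z.
  by move=> i; rewrite /a /K; lia.
have ha' : forall i, z' i 0 + (K i)%:Z = (a' i)%:Z.
  by move=> i; rewrite /a' /K; lia.
have E : forall (w : 'I_s -> int) (b : 'I_s -> nat), (forall i, w i + (K i)%:Z = (b i)%:Z) ->
    \prod_(i < s) ((nth_prime i)%:R : algC) ^ (w i) * \prod_(i < s) ((nth_prime i)%:R) ^+ (K i)
    = ((\prod_(i < s) nth_prime i ^ b i)%N)%:R.
  move=> w b hb; rewrite -big_split natr_prod /=; apply: eq_bigr => i _.
  by rewrite natrX exprnP -expfzDr ?pr_neq0 // hb -exprnP.
move=> Ez.
have : ((\prod_(i < s) nth_prime i ^ a i)%N)%:R = ((\prod_(i < s) nth_prime i ^ a' i)%N)%:R :> algC.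
  by rewrite -(E _ _ ha) -(E _ _ ha') Ez.
move/eqP; rewrite eqr_nat => /eqP /prime_indep h.
apply/matrixP => i j; rewrite (ord1 j).
have := ha i; have := ha' i; rewrite h => e1 e2.
by apply: (addIr (K i)%:Z); rewrite e2 e1.
Qed.


Lemma unit_const d (u : {mpoly algC[d]}) : u \is a GRing.unit -> u = (u@_0)%:MP.
Proof. by case/andP => /eqP. Qed.

Lemma mnm_neq0 d (m : 'X_{1..d}) : m != 0%MM -> exists k, (0 < m k)%N.
Proof.
move=> h; case: (boolP [exists k, 0 < m k]%N) => [/existsP [k hk]|]; first by exists k.
move=> /existsPn hn; case/eqP: h; apply/mnmP => k; rewrite mnm0E.
by have := hn k; rewrite lt0n negbK => /eqP.
Qed.

Lemma mulm_neq d (m : 'X_{1..d}) g : m != 0%MM -> (1 < g)%N -> m != (m *+ g)%MM.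
Proof.
move=> /mnm_neq0 [k hk] hg; apply/eqP => /mnmP /(_ k); rewrite mulmnE => e.
have : (m k * 1 < m k * g)%N by rewrite ltn_pmul2l.
by rewrite muln1 -e ltnn.
Qed.

Lemma irr_neq d (al be : 'X_{1..d}) :
  irreducible_elt ('X_[al] - 'X_[be] : {mpoly algC[d]}) -> al != be.
Proof. by case=> h _; apply: contraNneq h => ->; rewrite subrr. Qed.

Lemma coefp_al d (al be : 'X_{1..d}) : al != be ->
  ('X_[al] - 'X_[be] : {mpoly algC[d]})@_al = 1.
Proof. by move=> h; rewrite mcoeffB !mcoeffX eqxx eq_sym (negbTE h) subr0. Qed.

Lemma coefp_be d (al be : 'X_{1..d}) : al != be ->
  ('X_[al] - 'X_[be] : {mpoly algC[d]})@_be = -1.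
Proof. by move=> h; rewrite mcoeffB !mcoeffX eqxx (negbTE h) sub0r. Qed.

Lemma irr_disj d (al be : 'X_{1..d}) :
  irreducible_elt ('X_[al] - 'X_[be] : {mpoly algC[d]}) ->
  forall j, al j = 0%N \/ be j = 0%N.
Proof.
move=> hirr j; have hne := irr_neq hirr.
case: (posnP (al j)) => [->|ha]; first by left.
case: (posnP (be j)) => [->|hb]; first by right.
exfalso; case: hirr => _ [_ hirr].
have lea : (U_(j) <= al)%MM by apply/mnm_lepP => i; rewrite mnm1E; case: eqP => // <-.
have leb : (U_(j) <= be)%MM by apply/mnm_lepP => i; rewrite mnm1E; case: eqP => // <-.
have := hirr 'X_[U_(j)] ('X_[al - U_(j)] - 'X_[be - U_(j)]).
rewrite mulrBr -!mpolyXD ![(U_(j) + _)%MM]addmC !submK //.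
case => // /unit_const.
  move=> /(congr1 (mcoeff U_(j))); rewrite mcoeffC mcoeffX eqxx mnm1_eq0 mulr0.
  by move/eqP; rewrite oner_eq0.
set c := (_ @_ 0) => e.
have hp : 'X_[al] - 'X_[be] = c *: ('X_[U_(j)] : {mpoly algC[d]}).
  by rewrite -mul_mpolyC -e mulrC mulrBr -!mpolyXD ![(U_(j) + _)%MM]addmC !submK.
have h1 := congr1 (mcoeff al) hp; have h2 := congr1 (mcoeff be) hp.
rewrite coefp_al // mcoeffZ mcoeffX in h1.
rewrite coefp_be // mcoeffZ mcoeffX in h2.
move: h1 h2; case: eqP => [->|]; last by rewrite mulr0 => _ /eqP; rewrite oner_eq0.
by rewrite (negbTE hne) mulr0 => _ /eqP; rewrite oppr_eq0 oner_eq0.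
Qed.

Lemma irr_prim d (al be : 'X_{1..d}) :
  irreducible_elt ('X_[al] - 'X_[be] : {mpoly algC[d]}) ->
  forall g, (1 < g)%N -> (forall j, g %| al j /\ g %| be j)%N -> False.
Proof.
move=> hirr g hg hdiv; have hne := irr_neq hirr; have hdj := irr_disj hirr.
pose al' := [multinom (al i %/ g)%N | i < d].
pose be' := [multinom (be i %/ g)%N | i < d].
have eal : al = (al' *+ g)%MM.
  by apply/mnmP => i; rewrite mulmnE mnmE divnK //; case: (hdiv i).
have ebe : be = (be' *+ g)%MM.
  by apply/mnmP => i; rewrite mulmnE mnmE divnK //; case: (hdiv i).
have hne' : al' != be' by apply: contraNneq hne => e; rewrite eal ebe e.
case: hirr => hp0 [hpu hirr].
set r := \sum_(i < g) ('X_[al'] : {mpoly algC[d]}) ^+ (g.-1 - i) * 'X_[be'] ^+ i.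
have hfac : 'X_[al] - 'X_[be] = ('X_[al'] - 'X_[be']) * r.
  by rewrite /r -subrXX !mpolyXn -eal -ebe.
case: (hirr _ _ hfac) => /unit_const.
- set c := _@_0 => e.
  case: (eqVneq al' 0%MM) => [a0|an0].
  + have bn0 : be' != 0%MM by rewrite -a0 eq_sym.
    have := congr1 (mcoeff be') e; rewrite coefp_be // mcoeffC.
    by rewrite (negbTE bn0) mulr0 => /eqP; rewrite oppr_eq0 oner_eq0.
  + have := congr1 (mcoeff al') e; rewrite coefp_al // mcoeffC (negbTE an0) mulr0.
    by move/eqP; rewrite oner_eq0.
- set c := _@_0 => e.
  have hp : 'X_[al] - 'X_[be] = c *: ('X_[al'] - 'X_[be'] : {mpoly algC[d]}).
    by rewrite -mul_mpolyC -e mulrC.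
  have h1 := congr1 (mcoeff al) hp; rewrite coefp_al // mcoeffZ mcoeffB !mcoeffX in h1.
  case: (eqVneq al' 0%MM) => [a0|an0].
  + have a00 : al = 0%MM by apply/mnmP => i; rewrite eal a0 mulmnE !mnm0E.
    have bn0 : be' != 0%MM by rewrite -a0 eq_sym.
    have b0 : be != 0%MM by rewrite -a00 eq_sym.
    move: h1; rewrite a00 a0 eqxx (negbTE bn0) subr0 mulr1 => c1.
    have h2 := congr1 (mcoeff be) hp; rewrite coefp_be // mcoeffZ mcoeffB !mcoeffX in h2.
    move: h2; rewrite a0 eq_sym (negbTE b0) ebe (negbTE (mulm_neq bn0 hg)) subrr mulr0.
    by move/eqP; rewrite oppr_eq0 oner_eq0.
  + have [k hk] := mnm_neq0 an0.
    have hbk : be' != al.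
      apply/eqP => e2; have := hdj k; rewrite eal mulmnE.
      case => [/eqP|hb]; first by rewrite muln_eq0 (negbTE (lt0n_neq0 hk)) /= => /eqP g0; rewrite g0 in hg.
      have : be' k = 0%N by rewrite /be' mnmE hb div0n.
      by rewrite e2 eal mulmnE => /eqP; rewrite muln_eq0 (negbTE (lt0n_neq0 hk)) /= => /eqP g0; rewrite g0 in hg.
    move: h1; rewrite eal (negbTE (mulm_neq an0 hg)) -eal (negbTE hbk) subr0 mulr0.
    by move/eqP; rewrite oner_eq0.
Qed.


Lemma lattice_prim d (al be : 'X_{1..d}) :
  irreducible_elt ('X_[al] - 'X_[be] : {mpoly algC[d]}) ->
  forall (u : 'cV[int]_d) (c k : int), c != 0 ->
  c *: u = k *: exp_diff al be -> exists k' : int, u = k' *: exp_diff al be.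
Proof.
move=> hirr u c k c0 E; have hdj := irr_disj hirr.
have Ej : forall j, c * u j 0 = k * ((al j)%:Z - (be j)%:Z).
  by move=> j; have := congr1 (fun M : 'cV[int]_d => M j 0) E; rewrite !mxE.
set C := absz c; set Kn := absz k; set g := gcdn C Kn.
have Cpos : (0 < C)%N by rewrite absz_gt0.
have gpos : (0 < g)%N by rewrite gcdn_gt0 Cpos.
set C1 := (C %/ g)%N; set K1 := (Kn %/ g)%N.
have eC : (C1 * g = C)%N by rewrite divnK // dvdn_gcdl.
have eK : (K1 * g = Kn)%N by rewrite divnK // dvdn_gcdr.
have cop : coprime C1 K1.
  by rewrite /coprime -(eqn_pmul2r gpos) muln_gcdl eC eK mul1n.
have C1pos : (0 < C1)%N by move: Cpos; rewrite -eC muln_gt0 => /andP[].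
have dv : forall j, (C1 %| al j + be j)%N.
  move=> j; have := congr1 absz (Ej j); rewrite !abszM -/C -/Kn -eC -eK.
  rewrite -!mulnA [(g * _)%N]mulnC [(g * absz _)%N]mulnC !mulnA => /eqP.
  rewrite eqn_pmul2r // => /eqP e.
  rewrite -(Gauss_dvdr _ cop).
  have -> : (al j + be j = absz ((al j)%:Z - (be j)%:Z))%N by case: (hdj j) => ->; lia.
  by rewrite -e dvdn_mulr.
have C11 : C1 = 1%N.
  case: (ltngtP C1 1) => // [h|h]; first by move: C1pos h; clear; lia.
  exfalso; apply: (irr_prim hirr h) => j; have := dv j.
  by case: (hdj j) => ->; rewrite ?addn0 ?add0n => ->; rewrite dvdn0.
have : (c %| k)%Z.
  rewrite dvdzE -/C -/Kn -eC -eK C11 mul1n; exact: dvdn_mull.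
case/dvdzP => q eq; exists q; apply/matrixP => i j; rewrite (ord1 j) !mxE.
apply: (mulfI c0); have := Ej i; rewrite eq => ->; ring.
Qed.


Lemma div_mono d (al be : 'X_{1..d}) :
  irreducible_elt ('X_[al] - 'X_[be] : {mpoly algC[d]}) ->
  forall (m m' : 'X_{1..d}) (k : int), colm m - colm m' = k *: exp_diff al be ->
  principal_ideal ('X_[al] - 'X_[be]) ('X_[m] - 'X_[m'] : {mpoly algC[d]}).
Proof.
move=> hirr; have hdj := irr_disj hirr.
suff W : forall (m m' : 'X_{1..d}) (K : nat), colm m - colm m' = K%:Z *: exp_diff al be ->
  principal_ideal ('X_[al] - 'X_[be]) ('X_[m] - 'X_[m'] : {mpoly algC[d]}).
  move=> m m' [K|K] E; first exact: W E.
  have E' : colm m' - colm m = (K.+1)%:Z *: exp_diff al be.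
    by rewrite -opprB E NegzE scaleNr opprK.
  have [r hr] := W m' m _ E'; exists (-r); by rewrite mulNr -hr opprB.
move=> m m' K E.
have Ej : forall j, (m j)%:Z - (m' j)%:Z = K%:Z * ((al j)%:Z - (be j)%:Z).
  by move=> j; have := congr1 (fun M : 'cV[int]_d => M j 0) E; rewrite !mxE.
pose m0 := [multinom (m i - K * al i)%N | i < d].
have em : m = (m0 + al *+ K)%MM.
  by apply/mnmP => i; rewrite mnmDE mnmE mulmnE; have := Ej i; have := hdj i; lia.
have em' : m' = (m0 + be *+ K)%MM.
  by apply/mnmP => i; rewrite mnmDE mnmE mulmnE; have := Ej i; have := hdj i; lia.
exists ('X_[m0] * \sum_(i < K) ('X_[al] : {mpoly algC[d]}) ^+ (K.-1 - i) * 'X_[be] ^+ i).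
rewrite em em' !mpolyXD -!mpolyXn -mulrBr subrXX; ring.
Qed.


Lemma orbit_entry d (lam : 'rV[algC]_d) n i :
  loop_orbit (diag_mx lam) (const_mx 1) n i ord0 = lam 0 i ^+ n.
Proof.
rewrite /loop_orbit; elim: n => [|n IH]; first by rewrite expr0 mul1mx mxE.
by rewrite exprS -mulmxE -mulmxA mul_diag_mx mxE IH exprS.
Qed.

Lemma eval_orbit s d (A : 'M[int]_(s, d)) (P : {mpoly algC[d]}) n :
  P.@[fun i => loop_orbit (diag_mx (\row_j lambda_of A j)) (const_mx 1) n i ord0]
  = \sum_(m <- msupp P) P@_m * fval A m ^+ n.
Proof.
rewrite {1}(mpolyE P) raddf_sum; apply: eq_bigr => m _.
rewrite /= mevalZ mevalX /fval -prodrXl; congr (_ * _); apply: eq_bigr => i _.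
by rewrite orbit_entry mxE exprAC.
Qed.

Lemma eval_orbitX s d (A : 'M[int]_(s, d)) (m : 'X_{1..d}) n :
  ('X_[m] : {mpoly algC[d]}).@[fun i => loop_orbit (diag_mx (\row_j lambda_of A j)) (const_mx 1) n i ord0]
  = fval A m ^+ n.
Proof.
rewrite mevalX /fval -prodrXl; apply: eq_bigr => i _.
by rewrite orbit_entry mxE exprAC.
Qed.

Unset Implicit Arguments. Set Strict Implicit.

Theorem corollary1p3 (d s : nat) (alpha beta : 'X_{1..d}) (A : 'M[int]_(s, d)) :
  (1 <= d)%N -> (1 <= s)%N ->
  irreducible_elt ('X_[alpha] - 'X_[beta] : {mpoly algC[d]}) ->
  (forall u : 'cV[int]_d, A *m u = 0 <-> in_Sat_span (exp_diff alpha beta) u) ->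
  forall P : {mpoly algC[d]},
    invariant_ideal (diag_mx (\row_j lambda_of A j)) (const_mx 1) P <->
    principal_ideal ('X_[alpha] - 'X_[beta]) P.
Proof.
move=> _ _ hirr hA P.
set p := 'X_[alpha] - 'X_[beta].
have hv : A *m exp_diff alpha beta = 0.
  apply/hA; exists 1; split; first exact: oner_neq0.
  by exists 1; rewrite !scale1r.
have hfe : fval A alpha = fval A beta.
  rewrite !fvalE; have -> // : A *m colm alpha = A *m colm beta.
  apply/eqP; rewrite -subr_eq0 -mulmxBr.
  have -> : colm alpha - colm beta = exp_diff alpha beta.
    by apply/matrixP => i j; rewrite !mxE.
  by rewrite hv.
split; last first.
  case=> r -> n; rewrite mevalM mevalB !eval_orbitX hfe subrr mulr0 //.
move=> hinv.
set S := msupp P.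
set U := undup (map (fval A) S).
pose T mu := \sum_(m <- S | fval A m == mu) P@_m.
have hT : forall mu, mu \in U -> T mu = 0.
  apply: expsum0; first exact: undup_uniq.
  move=> n; rewrite -[RHS](hinv n) eval_orbit (group_sum _ (fval A)).
  apply: eq_bigr => mu _; rewrite /T mulr_suml; apply: eq_bigr => m /eqP -> //.
pose rep mu := nth 0%MM S (find (fun m => fval A m == mu) S).
have hrep : forall m, m \in S -> fval A (rep (fval A m)) = fval A m.
  move=> m mS; apply/eqP; apply: (nth_find 0%MM (a := fun m' => fval A m' == fval A m)).
  by apply/hasP; exists m.
have hP : P = \sum_(m <- S) P@_m *: ('X_[m] - 'X_[rep (fval A m)])
              + \sum_(m <- S) P@_m *: 'X_[rep (fval A m)].
  rewrite -big_split /= {1}(mpolyE P); apply: eq_bigr => m _.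
  by rewrite -scalerDr subrK.
have h0 : \sum_(m <- S) P@_m *: ('X_[rep (fval A m)] : {mpoly algC[d]}) = 0.
  rewrite (group_sum _ (fval A)) big_seq big1 // => mu muU.
  rewrite (eq_bigr (fun m => P@_m *: 'X_[rep mu])); last by move=> m /eqP ->.
  by rewrite -scaler_suml; have := hT _ muU; rewrite /T => ->; rewrite scale0r.
rewrite hP h0 addr0 big_seq.
apply: (big_ind (principal_ideal p)).
- by exists 0; rewrite mul0r.
- by move=> x y [r1 ->] [r2 ->]; exists (r1 + r2); rewrite mulrDl.
move=> m mS.
have [r hr] : principal_ideal p ('X_[m] - 'X_[rep (fval A m)]).
  have e := f_inj (esym (hrep m mS)).
  have hz : A *m (colm m - colm (rep (fval A m))) = 0 by rewrite mulmxBr e subrr.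
  have [c [c0 [k hk]]] := (hA _).1 hz.
  have [k' hk'] := lattice_prim hirr c0 hk.
  have := div_mono hirr hk'. rewrite /p. exact.
by exists (P@_m *: r); rewrite hr scalerAl.
Qed.
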